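(* Let $\mathbf L=(L,\vee,\wedge,0,1)$ be a complemented lattice with $0\ne1$ and $\Phi$ an equivalence relation on $L$ having the Substitution Property with respect to $\to$. Then: (i) $\Phi$ has the Substitution Property with respect to $^+$; (ii) $[1]\Phi$ is a deductive system of $\mathbf L$; (iii) $\Phi\subseteq\Theta([1]\Phi)$.
   Context: For $a\in L$, $a^+:=\{x\in L\mid a\vee x=1,\ a\wedge x=0\}$ (the set of all complements of $a$), and $a\to b:=\{x\vee(a\wedge b)\mid x\in a^+\}$. An equivalence relation $\Phi$ on $L$ has the Substitution Property with respect to $^+$ if $(a,b)\in\Phi$ implies $a^+\times b^+\subseteq\Phi$, and with respect to $\to$ if $(a,b)\in\Phi$ implies $(a\to c)\times(b\to c)\subseteq\Phi$ for all $c\in L$. A deductive system of $\mathbf L$ is a subset $D\subseteq L$ such that $1\in D$, and whenever $a\in D$, $b\in L$ and $a\to b\subseteq D$, then $b\in D$. For a deductive system $D$, $\Theta(D):=\{(x,y)\in L^2\mid x\to y\subseteq D\text{ and }y\to x\subseteq D\}$. $[1]\Phi$ is the $\Phi$-class of $1$. *)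

(* Defs.v *)
From HB Require Import structures.
From mathcomp Require Import all_boot all_order.
Set Implicit Arguments. Unset Strict Implicit. Unset Printing Implicit Defensive.
Import Order.TTheory.
Local Open Scope order_scope.

Section Defs.
Context {disp : Order.disp_t} {L : tbLatticeType disp}.

Definition complements (a : L) : L -> Prop :=
  fun x => a `|` x = \top /\ a `&` x = \bot.

Definition complemented : Prop := forall a : L, exists x, complements a x.

Definition arrow (a b : L) : L -> Prop :=
  fun y => exists x, complements a x /\ y = x `|` (a `&` b).

Definition is_equivalence (Phi : L -> L -> Prop) : Prop :=
  (forall x, Phi x x) /\ (forall x y, Phi x y -> Phi y x) /\
  (forall x y z, Phi x y -> Phi y z -> Phi x z).

Definition SP_compl (Phi : L -> L -> Prop) : Prop :=
  forall a b, Phi a b -> forall x y, complements a x -> complements b y -> Phi x y.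

Definition SP_arrow (Phi : L -> L -> Prop) : Prop :=
  forall a b c, Phi a b ->
    forall x y, arrow a c x -> arrow b c y -> Phi x y.

Definition deductive_system (D : L -> Prop) : Prop :=
  D \top /\ forall a b, D a -> (forall x, arrow a b x -> D x) -> D b.

Definition Theta (D : L -> Prop) (x y : L) : Prop :=
  (forall z, arrow x y z -> D z) /\ (forall z, arrow y x z -> D z).

Definition class_top (Phi : L -> L -> Prop) : L -> Prop := fun x => Phi x \top.

End Defs.

(* Main.v *)
Require Import Defs.
From HB Require Import structures.
From mathcomp Require Import all_boot all_order.
Import Order.TTheory.
Local Open Scope order_scope.

Theorem theorem6 (disp : Order.disp_t) (L : tbLatticeType disp)
  (Phi : L -> L -> Prop) :
  complemented (L := L) -> (\bot : L) <> \top ->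
  is_equivalence Phi -> SP_arrow Phi ->
  SP_compl Phi /\ deductive_system (class_top Phi) /\
  (forall x y, Phi x y -> Theta (class_top Phi) x y).
Proof.
move=> Hc _ [Hr [Hs Ht]] Hsp.
split.
  move=> a b Hab x y Hx Hy.
  apply: (Hsp a b \bot Hab x y).
    by exists x; split => //; rewrite meetx0 joinx0.
  by exists y; split => //; rewrite meetx0 joinx0.
split.
  split; first exact: Hr.
  move=> a b Ha Hall.
  have [u Hu] := Hc a.
  have Hx : arrow a b (u `|` (a `&` b)) by exists u.
  have Hb : arrow \top b b.
    exists \bot; split; first by split; rewrite ?join0x ?meetx0 //; rewrite joinx0.
    by rewrite join0x meet1x.
  have H1 := Hsp a \top b Ha _ _ Hx Hb.
  have H2 := Hall _ Hx.
  rewrite /class_top in H2 *.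
  exact: Ht _ _ _ (Hs _ _ H1) H2.
move=> x y Hxy.
have key : forall a b, Phi a b -> forall z, arrow a b z -> class_top Phi z.
  move=> a0 b0 Hab z Hz.
  have [u [Hu1 Hu2]] := Hc b0.
  have Hw : arrow b0 b0 \top.
    by exists u; split; [split|]; rewrite ?meetxx // joinC.
  exact (Hsp a0 b0 b0 Hab z \top Hz Hw).
split.
  exact: key.
move=> z Hz.
have [u [Hu1 Hu2]] := Hc x.
have Hw : arrow x x \top.
  by exists u; split; [split|]; rewrite ?meetxx // joinC.
exact (Hsp y x x (Hs _ _ Hxy) z \top Hz Hw).
Qed.
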